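(* For every finite alphabet $\Sigma$ with $|\Sigma| \geq 2$, the group $\mathrm{Aut}(\Sigma^\mathbb{Z})$ does not satisfy the Tits alternative. That is, there is a finitely generated subgroup of $\mathrm{Aut}(\Sigma^\mathbb{Z})$ which is not virtually solvable and contains no free group on two generators.
   Context: $\Sigma^\mathbb{Z}$ carries the product topology and the shift $\sigma(x)_i = x_{i+1}$. $\mathrm{Aut}(\Sigma^\mathbb{Z})$ is the group of homeomorphisms $f:\Sigma^\mathbb{Z}\to\Sigma^\mathbb{Z}$ with $f\circ\sigma=\sigma\circ f$ (the group of reversible cellular automata). A group $G$ satisfies the Tits alternative if every finitely generated subgroup $H \le G$ is either virtually solvable (has a solvable subgroup of finite index) or contains a free group on two generators. *)

(* Defs.v *)
From Stdlib Require Import ZArith List.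
From mathcomp Require Import all_boot.
Set Implicit Arguments. Unset Strict Implicit. Unset Printing Implicit Defensive.

Definition config (S : Type) := Z -> S.

Definition shift (S : Type) (x : config S) : config S := fun i => x (i + 1)%Z.

Definition agree (S : Type) (n : nat) (x y : config S) : Prop :=
  forall i : Z, (- Z.of_nat n <= i <= Z.of_nat n)%Z -> x i = y i.

(* Continuity for the product topology on S^Z (S discrete): the cylinder
   sets over centered windows form a neighbourhood basis. *)
Definition continuous (S : Type) (f : config S -> config S) : Prop :=
  forall (x : config S) (n : nat), exists m : nat,
    forall y : config S, agree m x y -> agree n (f x) (f y).

Definition is_aut (S : Type) (f : config S -> config S) : Prop :=
  (exists g : config S -> config S,
      cancel f g /\ cancel g f /\ continuous f /\ continuous g)
  /\ (forall x, f (shift x) = shift (f x)).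

Section GroupTheory.
Variable T : Type.
Notation fn := (T -> T).

Inductive gen (A : fn -> Prop) : fn -> Prop :=
| gen_id : gen A id
| gen_mul : forall a b, A a -> gen A b -> gen A (a \o b)
| gen_mulinv : forall a a' b, A a -> cancel a a' -> cancel a' a ->
    gen A b -> gen A (a' \o b).

Definition gen_list (l : list fn) : fn -> Prop := gen (fun f => In f l).

Definition is_subgroup (K : fn -> Prop) : Prop :=
  K id /\ (forall a b, K a -> K b -> K (a \o b)) /\
  (forall a, K a -> exists a', cancel a a' /\ cancel a' a /\ K a').

Definition commutators (D : fn -> Prop) : fn -> Prop :=
  fun c => exists a a' b b', D a /\ D b /\ cancel a a' /\ cancel a' a /\
    cancel b b' /\ cancel b' b /\ c = a' \o b' \o a \o b.

Definition derived (D : fn -> Prop) : fn -> Prop := gen (commutators D).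

Fixpoint derived_iter (n : nat) (D : fn -> Prop) : fn -> Prop :=
  match n with 0 => D | n'.+1 => derived (derived_iter n' D) end.

Definition solvable_grp (K : fn -> Prop) : Prop :=
  exists n, forall k, derived_iter n K k -> k = id.

Definition finite_index (K H : fn -> Prop) : Prop :=
  exists l : list fn, forall h, H h -> exists r k, In r l /\ K k /\ h = r \o k.

Definition virtually_solvable (H : fn -> Prop) : Prop :=
  exists K, is_subgroup K /\ (forall k, K k -> H k) /\
    finite_index K H /\ solvable_grp K.

(* words over {a, b}^{+-1}: letter (g, s), g = false for a, true for b;
   s = true for the inverse *)
Definition letter := (bool * bool)%type.

Fixpoint reduced (w : list letter) : Prop :=
  match w with
  | l1 :: ((l2 :: _) as w') =>
      ~ (l1.1 = l2.1 /\ l1.2 = ~~ l2.2) /\ reduced w'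
  | _ => True
  end.

Definition eval_letter (a a' b b' : fn) (l : letter) : fn :=
  match l with
  | (false, false) => a | (false, true) => a'
  | (true, false) => b | (true, true) => b' end.

Fixpoint eval_word (a a' b b' : fn) (w : list letter) : fn :=
  match w with
  | nil => id
  | l :: w' => eval_letter a a' b b' l \o eval_word a a' b b' w'
  end.

Definition contains_free2 (H : fn -> Prop) : Prop :=
  exists a a' b b', H a /\ H b /\ cancel a a' /\ cancel a' a /\
    cancel b b' /\ cancel b' b /\
    forall w : list letter, w <> nil -> reduced w -> eval_word a a' b b' w <> id.

End GroupTheory.

(* Main.v *)
From Stdlib Require Import ZArith List Lia FunctionalExtensionality Classical.
From mathcomp Require Import all_boot.
Require Import Defs.
Set Implicit Arguments. Unset Strict Implicit. Unset Printing Implicit Defensive.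

Module G.

Definition perm5 := seq nat.
Definition pcomp (p q : perm5) : perm5 := map (fun j => nth 0 p (nth 0 q j)) (iota 0 5).
Definition idp : perm5 := [:: 0; 1; 2; 3; 4].
Definition ppow (p : perm5) n := iter n (pcomp p) idp.
Definition pinv p := ppow p 29.
Definition pcomm x y := pcomp (pinv x) (pcomp (pinv y) (pcomp x y)).
Definition A5 : seq perm5 := [:: [:: 0; 1; 2; 3; 4]; [:: 0; 1; 3; 4; 2]; [:: 0; 1; 4; 2; 3]; [:: 0; 2; 1; 4; 3]; [:: 0; 2; 3; 1; 4]; [:: 0; 2; 4; 3; 1]; [:: 0; 3; 1; 2; 4]; [:: 0; 3; 2; 4; 1]; [:: 0; 3; 4; 1; 2]; [:: 0; 4; 1; 3; 2]; [:: 0; 4; 2; 1; 3]; [:: 0; 4; 3; 2; 1]; [:: 1; 0; 2; 4; 3]; [:: 1; 0; 3; 2; 4]; [:: 1; 0; 4; 3; 2]; [:: 1; 2; 0; 3; 4]; [:: 1; 2; 3; 4; 0]; [:: 1; 2; 4; 0; 3]; [:: 1; 3; 0; 4; 2]; [:: 1; 3; 2; 0; 4]; [:: 1; 3; 4; 2; 0]; [:: 1; 4; 0; 2; 3]; [:: 1; 4; 2; 3; 0]; [:: 1; 4; 3; 0; 2]; [:: 2; 0; 1; 3; 4]; [:: 2; 0; 3; 4; 1]; [:: 2; 0; 4; 1; 3]; [:: 2; 1; 0; 4; 3]; [:: 2; 1; 3; 0; 4]; [:: 2; 1; 4; 3; 0]; [:: 2; 3; 0; 1; 4]; [:: 2;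 3; 1; 4; 0]; [:: 2; 3; 4; 0; 1]; [:: 2; 4; 0; 3; 1]; [:: 2; 4; 1; 0; 3]; [:: 2; 4; 3; 1; 0]; [:: 3; 0; 1; 4; 2]; [:: 3; 0; 2; 1; 4]; [:: 3; 0; 4; 2; 1]; [:: 3; 1; 0; 2; 4]; [:: 3; 1; 2; 4; 0]; [:: 3; 1; 4; 0; 2]; [:: 3; 2; 0; 4; 1]; [:: 3; 2; 1; 0; 4]; [:: 3; 2; 4; 1; 0]; [:: 3; 4; 0; 1; 2]; [:: 3; 4; 1; 2; 0]; [:: 3; 4; 2; 0; 1]; [:: 4; 0; 1; 2; 3]; [:: 4; 0; 2; 3; 1]; [:: 4; 0; 3; 1; 2]; [:: 4; 1; 0; 3; 2]; [:: 4; 1; 2; 0; 3]; [:: 4; 1; 3; 2; 0]; [:: 4; 2; 0; 1; 3]; [:: 4; 2; 1; 3; 0]; [:: 4; 2; 3; 0; 1]; [:: 4; 3; 0; 2; 1]; [:: 4; 3; 1; 0; 2]; [:: 4; 3; 2; 1; 0]].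
Definition pvalid (p : perm5) := all (fun j => j < 5) p.

Lemma A5_closed : all (fun p => all (fun q => pcomp p q \in A5) A5) A5.
Proof. by vm_compute. Qed.
Lemma A5_valid : all pvalid A5.
Proof. by vm_compute. Qed.
Lemma A5_exp : all (fun p => ppow p 30 == idp) A5.
Proof. by vm_compute. Qed.
Lemma A5_inv : all (fun p => (pcomp (pinv p) p == idp) && (pcomp p (pinv p) == idp) && (pinv p \in A5)) A5.
Proof. by vm_compute. Qed.
Lemma A5_id : idp \in A5.
Proof. by vm_compute. Qed.
Lemma A5_comm : all (fun g => has (fun x => has (fun y => g == pcomm x y) A5) A5) A5.
Proof. by vm_compute. Qed.

End G.
Import G.

Module Act.

Section Act.
Variables (S : finType) (one zero : S).
Hypothesis hoz : one != zero.

Definition trip := (S * S * S)%type.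
Definition bitv (j k : nat) : S := if odd (j %/ 2 ^ k) then one else zero.
Definition enc (j : nat) : trip := (bitv j 2, bitv j 1, bitv j 0).
Definition dec (x : trip) : option nat := ohead [seq j <- iota 0 5 | enc j == x].
Definition act (p : perm5) (x : trip) : trip :=
  if dec x is Some j then enc (nth 0 p j) else x.

Lemma bitv_eq j j' k : (bitv j k == bitv j' k) = (odd (j %/ 2 ^ k) == odd (j' %/ 2 ^ k)).
Proof.
rewrite /bitv; case: (odd _); case: (odd _) => //=; rewrite ?eqxx //.
  by rewrite (negbTE hoz).
by rewrite eq_sym (negbTE hoz).
Qed.

Lemma encE j j' : (enc j == enc j') =
  [&& odd (j %/ 2 ^ 2) == odd (j' %/ 2 ^ 2), odd (j %/ 2 ^ 1) == odd (j' %/ 2 ^ 1)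
    & odd (j %/ 2 ^ 0) == odd (j' %/ 2 ^ 0)].
Proof. by rewrite /enc !xpair_eqE !bitv_eq andbA. Qed.

Lemma dec_enc j : j < 5 -> dec (enc j) = Some j.
Proof.
rewrite /dec.
by case: j => [|[|[|[|[|j]]]]] //= _; rewrite !encE.
Qed.

Lemma dec_some x j : dec x = Some j -> j < 5 /\ enc j = x.
Proof.
rewrite /dec => h.
have : j \in [seq j <- iota 0 5 | enc j == x].
  by move: h; case: [seq _ <- _ | _] => //= a s [->]; rewrite inE eqxx.
rewrite mem_filter mem_iota => /andP[/eqP -> ] /andP[_ ] //.
Qed.

Lemma nth_pcomp p q j : j < 5 -> nth 0 (pcomp p q) j = nth 0 p (nth 0 q j).
Proof. by move=> hj; rewrite /pcomp (nth_map 0) ?size_iota // nth_iota. Qed.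

Lemma nth_valid q j : pvalid q -> nth 0 q j < 5.
Proof.
move=> hq; case: (ltnP j (size q)) => hj; last by rewrite nth_default.
by move/allP: hq; apply; apply: mem_nth.
Qed.

Lemma act_comp p q x : pvalid q -> act (pcomp p q) x = act p (act q x).
Proof.
move=> hq; rewrite /act; case e: (dec x) => [j|]; last by rewrite e.
have [hj _] := dec_some e.
by rewrite dec_enc ?nth_valid // nth_pcomp.
Qed.

Lemma act_id x : act idp x = x.
Proof.
rewrite /act; case e: (dec x) => [j|] //.
have [hj <-] := dec_some e.
by case: j hj {e} => [|[|[|[|[|j]]]]].
Qed.

Lemma act_idp p x : p == idp -> act p x = x.
Proof. by move/eqP ->; apply: act_id. Qed.

Lemma enc01 : enc 1 != enc 0.
Proof. by rewrite encE. Qed.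

End Act.

End Act.
Import Act.

Module Blk.

Section Blk.
Variables (S : finType) (one zero : S).
Hypothesis hoz : one != zero.
Local Open Scope Z_scope.
Notation C := (config S).

Definition blkw (w : Z -> S) : bool :=
  (w 0 == one) && ((w 1 == one) && ((w 2 == one) && ((w 3 == zero) && ((w 5 == zero) &&
  ((w 7 == zero) && ((w 9 == zero) && ((w 11 == zero) && (w 13 == zero)))))))).
Definition blk (c : C) (b : Z) : bool := blkw (fun k => c (b + k)).
Arguments blk : simpl never.

Lemma blkwP w : blkw w -> w 0 = one /\ w 1 = one /\ w 2 = one /\ w 3 = zero /\ w 5 = zero /\
  w 7 = zero /\ w 9 = zero /\ w 11 = zero /\ w 13 = zero.
Proof.
rewrite /blkw => /andP[/eqP-> /andP[/eqP-> /andP[/eqP-> /andP[/eqP-> /andP[/eqP->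
  /andP[/eqP-> /andP[/eqP-> /andP[/eqP-> /eqP->]]]]]]]].
by [].
Qed.

Lemma blkw_loc w w' : (forall k, 0 <= k <= 13 -> w k = w' k) -> blkw w = blkw w'.
Proof. by move=> h; rewrite /blkw !h //; lia. Qed.

Lemma blkw_congr w w' : (forall k, w k = w' k) -> blkw w = blkw w'.
Proof. by move=> h; apply: blkw_loc => k _. Qed.

Lemma blkP c b : blk c b -> c (b+0) = one /\ c (b+1) = one /\ c (b+2) = one /\ c (b+3) = zero
  /\ c (b+5) = zero /\ c (b+7) = zero /\ c (b+9) = zero /\ c (b+11) = zero /\ c (b+13) = zero.
Proof. exact: blkwP. Qed.

Ltac clash := match goal with
  | H1 : ?f ?u = one, H2 : ?f ?v = zero |- _ =>
    let E := fresh in assert (E : u = v) by lia; rewrite E H2 in H1;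
    by have := hoz; rewrite -H1 eqxx
  end.

Lemma nonoverlap c x y : blk c x -> blk c y -> x < y -> x + 14 <= y.
Proof.
move=> hx hy lt; case: (Z_lt_le_dec y (x + 14)) => // h; exfalso.
have [a0 [a1 [a2 [a3 [a5 [a7 [a9 [a11 a13]]]]]]]] := blkP hx.
have [b0 [b1 [b2 [b3 [b5 [b7 [b9 [b11 b13]]]]]]]] := blkP hy.
have : y = x+1 \/ y = x+2 \/ y = x+3 \/ y = x+4 \/ y = x+5 \/ y = x+6 \/ y = x+7 \/ y = x+8 \/
  y = x+9 \/ y = x+10 \/ y = x+11 \/ y = x+12 \/ y = x+13 by lia.
by case=> [e|[e|[e|[e|[e|[e|[e|[e|[e|[e|[e|[e|e]]]]]]]]]]]]; subst y; clash.
Qed.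

Lemma no2 c x y : blk c x -> blk c y -> x = y \/ x + 14 <= y \/ y + 14 <= x.
Proof.
move=> hx hy; case: (Z.lt_trichotomy x y) => [h|[h|h]]; first by right; left; apply: nonoverlap hx hy h.
  by left.
by right; right; apply: nonoverlap hy hx h.
Qed.

Definition slotoff (k : Z) := k = 4 \/ k = 6 \/ k = 8 \/ k = 10 \/ k = 12.

Definition only_slots (f : C -> C) :=
  forall c i, f c i <> c i -> exists b, blk c b /\ slotoff (i - b).

Lemma blk_ext c d b :
  (forall k, 0 <= k <= 13 -> ~ slotoff k -> c (b + k) = d (b + k)) -> blk c b = blk d b.
Proof.
move=> h; rewrite /blk /blkw.
rewrite (h 0) ?(h 1) ?(h 2) ?(h 3) ?(h 5) ?(h 7) ?(h 9) ?(h 11) ?(h 13) //;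
  rewrite /slotoff; lia.
Qed.

Lemma frame_fixed f c b k : only_slots f -> blk c b -> 0 <= k <= 13 -> ~ slotoff k ->
  f c (b + k) = c (b + k).
Proof.
move=> hf hb hk hs; case: (f c (b + k) =P c (b + k)) => // /hf [b' [hb' hs']].
have := no2 hb hb'; rewrite /slotoff in hs hs'.
case=> [e|]; first by subst b'; exfalso; apply: hs; lia.
lia.
Qed.

Lemma blk_fwd f c b : only_slots f -> blk c b -> blk (f c) b.
Proof.
move=> hf hb; rewrite (@blk_ext _ c) // => k hk hs; exact: frame_fixed.
Qed.

Lemma blk_inv f c b : only_slots f -> blk (f c) b = blk c b.
Proof.
move=> hf; case hb: (blk c b); first by apply: blk_fwd.
apply/negbTE/negP => hfb; move/negbT/negP: hb; apply.
rewrite -(@blk_ext (f c)) // => k hk hs.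
case: (f c (b + k) =P c (b + k)) => // /hf [b' [hb' hs']].
have hfb' := blk_fwd hf hb'.
have := no2 hfb hfb'; rewrite /slotoff in hs hs'.
case=> [e|]; first by subst b'; exfalso; apply: hs; lia.
lia.
Qed.

End Blk.

End Blk.
Import Blk.

Module Maps.

Section Maps.
Variables (S : finType) (one zero : S).
Hypothesis hoz : one != zero.
Local Open Scope Z_scope.
Notation C := (config S).
Notation blk := (blk one zero).
Notation blkw := (blkw one zero).

Definition ca (F : (Z -> S) -> S) (c : C) : C := fun i => F (fun j => c (i + j)).

Lemma blk_sh (c : C) i a : blkw (fun k => c (i + (a + k))) = blk c (i + a).
Proof. by apply: blkw_congr => k; rewrite Z.add_assoc. Qed.

Definition s1r (w : Z -> S) : S :=
  if blkw (fun k => w (-4 + k)) then w 2 else if blkw (fun k => w (-6 + k)) then w (-2) else w 0.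
Definition s2r (w : Z -> S) : S :=
  if blkw (fun k => w (-6 + k)) && blkw (fun k => w (8 + k)) then w 12
  else if blkw (fun k => w (-4 + k)) && blkw (fun k => w (-18 + k)) then w (-12) else w 0.
Definition s1 := ca s1r.
Definition s2 := ca s2r.

Definition tri (c : C) (b : Z) : trip S := (c (b + 8), c (b + 10), c (b + 12)).
Definition apply (phi : Z -> perm5) (c : C) : C := fun i =>
  if blk c (i + -8) then (act one zero (phi (i + -8)) (tri c (i + -8))).1.1
  else if blk c (i + -10) then (act one zero (phi (i + -10)) (tri c (i + -10))).1.2
  else if blk c (i + -12) then (act one zero (phi (i + -12)) (tri c (i + -12))).2
  else c i.
Arguments apply : simpl never.
Arguments s1 : simpl never.
Arguments s2 : simpl never.
Arguments tri : simpl never.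

Lemma s1E c i : s1 c i = if blk c (i + -4) then c (i + 2) else if blk c (i + -6) then c (i + -2) else c i.
Proof. by rewrite /s1 /ca /s1r !blk_sh Z.add_0_r. Qed.
Lemma s2E c i : s2 c i = if blk c (i + -6) && blk c (i + 8) then c (i + 12)
  else if blk c (i + -4) && blk c (i + -18) then c (i + -12) else c i.
Proof. by rewrite /s2 /ca /s2r !blk_sh Z.add_0_r. Qed.
Lemma applyE phi c i : apply phi c i =
  if blk c (i + -8) then (act one zero (phi (i + -8)) (tri c (i + -8))).1.1
  else if blk c (i + -10) then (act one zero (phi (i + -10)) (tri c (i + -10))).1.2
  else if blk c (i + -12) then (act one zero (phi (i + -12)) (tri c (i + -12))).2
  else c i.
Proof. by []. Qed.

Lemma os_s1 : only_slots one zero s1.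
Proof.
move=> c i; rewrite s1E; case: ifP => h1.
  by exists (i + -4); split => //; rewrite /slotoff; lia.
case: ifP => h2 // _; by exists (i + -6); split => //; rewrite /slotoff; lia.
Qed.
Lemma os_s2 : only_slots one zero s2.
Proof.
move=> c i; rewrite s2E; case: ifP => /andP h1.
  by exists (i + -6); split; [case: h1|rewrite /slotoff; lia].
case: ifP => /andP h2 // _; by exists (i + -4); split; [case: h2|rewrite /slotoff; lia].
Qed.
Lemma os_apply phi : only_slots one zero (apply phi).
Proof.
move=> c i; rewrite applyE; case: ifP => h1.
  by exists (i + -8); split => //; rewrite /slotoff; lia.
case: ifP => h2; first by exists (i + -10); split => //; rewrite /slotoff; lia.
case: ifP => h3 // _; by exists (i + -12); split => //; rewrite /slotoff; lia.
Qed.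

Lemma blk_s1 c b : blk (s1 c) b = blk c b. Proof. have h := blk_inv hoz c b os_s1. exact h. Qed.
Lemma blk_s2 c b : blk (s2 c) b = blk c b. Proof. have h := blk_inv hoz c b os_s2. exact h. Qed.
Lemma blk_apply phi c b : blk (apply phi c) b = blk c b. Proof. have h := blk_inv hoz c b (os_apply (phi:=phi)). exact h. Qed.

Ltac norm := rewrite -?Z.add_assoc /= ?Z.add_0_r.
Ltac splitblk := repeat match goal with |- context [blk ?c ?x] =>
   let h := fresh "hb" in case h: (blk c x) => /= end.
Ltac killov := try (match goal with H1 : context [blk ?c ?x], H2 : context [blk ?c ?y] |- _ =>
   have := no2 hoz H1 H2; move=> ?; exfalso; lia end).
Ltac crush := repeat (rewrite ?s1E ?s2E ?applyE ?blk_s1 ?blk_s2 ?blk_apply; norm);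
   splitblk; killov; try reflexivity; try congruence.

Lemma s1K c : s1 (s1 c) = c.
Proof. apply: functional_extensionality => i; crush. Qed.

Lemma s2K c : s2 (s2 c) = c.
Proof. apply: functional_extensionality => i; crush. Qed.

Lemma tri_s1 c b : blk c b -> tri (s1 c) b = tri c b.
Proof. move=> h; rewrite /tri; crush. Qed.
Lemma tri_s2 c b : blk c b -> tri (s2 c) b = tri c b.
Proof. move=> h; rewrite /tri; crush. Qed.

Lemma trip_eta (x : trip S) : (x.1.1, x.1.2, x.2) = x.
Proof. by case: x => [[]]. Qed.

Lemma tri_apply phi c b : blk c b -> tri (apply phi c) b = act one zero (phi b) (tri c b).
Proof. move=> h; rewrite /tri; crush; by rewrite trip_eta /tri. Qed.

Lemma s1_apply phi c : s1 (apply phi c) = apply phi (s1 c).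
Proof.
apply: functional_extensionality => i; crush; rewrite ?tri_s1 //.
Qed.
Lemma s2_apply phi c : s2 (apply phi c) = apply phi (s2 c).
Proof.
apply: functional_extensionality => i; crush; rewrite ?tri_s2 //.
Qed.

Lemma apply_comp phi1 phi2 c : (forall b, pvalid (phi2 b)) ->
  apply phi1 (apply phi2 c) = apply (fun b => pcomp (phi1 b) (phi2 b)) c.
Proof.
move=> hv; apply: functional_extensionality => i.
rewrite !applyE !blk_apply.
case h1: (blk c (i + -8)); first by rewrite tri_apply // act_comp.
case h2: (blk c (i + -10)); first by rewrite tri_apply // act_comp.
case h3: (blk c (i + -12)); first by rewrite tri_apply // act_comp.
by [].
Qed.

Lemma apply_id c : apply (fun _ => idp) c = c.
Proof.
apply: functional_extensionality => i; rewrite applyE !act_id //.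
case: ifP => h1; first by rewrite /tri; norm.
case: ifP => h2; first by rewrite /tri; norm.
case: ifP => h3; first by rewrite /tri; norm.
by [].
Qed.

Lemma apply_lane phi c b k : blk c b -> (k = 4 \/ k = 6) -> apply phi c (b + k) = c (b + k).
Proof.
by move=> h [->|->]; crush.
Qed.

End Maps.

End Maps.
Import Maps.

Module Aut.

Section Aut.
Variables (S : finType) (one zero : S).
Hypothesis hoz : one != zero.
Local Open Scope Z_scope.
Notation C := (config S).
Notation blk := (blk one zero).
Notation blkw := (blkw one zero).
Notation s1 := (s1 one zero).
Notation s2 := (s2 one zero).
Notation apply := (apply one zero).
Notation tri := (@tri S).
Notation act := (act one zero).

Lemma ca_shift (F : (Z -> S) -> S) c : ca F (shift c) = shift (ca F c).
Proof.
apply: functional_extensionality => i; rewrite /ca /shift; f_equal.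
apply: functional_extensionality => j; f_equal; lia.
Qed.

Definition local (F : (Z -> S) -> S) := forall w w' : Z -> S,
  (forall j, -30 <= j <= 30 -> w j = w' j) -> F w = F w'.

Lemma ca_cont F : local F -> continuous (ca F).
Proof.
move=> hF x n; exists (Nat.add n 30) => y hxy i hi; rewrite /ca; apply: hF => j hj.
apply: hxy; lia.
Qed.

Lemma cont_comp (f g : C -> C) : continuous f -> continuous g -> continuous (f \o g).
Proof.
move=> hf hg x n; have [m hm] := hf (g x) n; have [k hk] := hg x m.
by exists k => y hy; apply: hm; apply: hk.
Qed.

Lemma blkw_local (w w' : Z -> S) a : (forall j, -30 <= j <= 30 -> w j = w' j) ->
  -20 <= a <= 16 -> blkw (fun k => w (a + k)) = blkw (fun k => w' (a + k)).
Proof. move=> h ha; apply: blkw_loc => k hk; apply: h; lia. Qed.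

Lemma s1r_loc : local (s1r one zero).
Proof.
move=> w w' h; rewrite /s1r (blkw_local (a:=-4) h) ?(blkw_local (a:=-6) h) ?h //; lia.
Qed.
Lemma s2r_loc : local (s2r one zero).
Proof.
move=> w w' h; rewrite /s2r (blkw_local (a:=-4) h) ?(blkw_local (a:=-6) h) ?(blkw_local (a:=8) h)
  ?(blkw_local (a:=-18) h) ?h //; lia.
Qed.

Definition pg (g : perm5) (w : Z -> S) (b : Z) : perm5 :=
  if blkw (fun k => w (b + k)) && (w (b + 4) == one) then g else idp.
Definition triw (w : Z -> S) (b : Z) : trip S := (w (b + 8), w (b + 10), w (b + 12)).
Definition ar (g : perm5) (w : Z -> S) : S :=
  if blkw (fun k => w (-8 + k)) then (act (pg g w (-8)) (triw w (-8))).1.1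
  else if blkw (fun k => w (-10 + k)) then (act (pg g w (-10)) (triw w (-10))).1.2
  else if blkw (fun k => w (-12 + k)) then (act (pg g w (-12)) (triw w (-12))).2
  else w 0.
Definition aut g := ca (ar g).
Definition psig (g : perm5) (c : C) (b : Z) : perm5 :=
  if blk c b && (c (b + 4) == one) then g else idp.

Lemma ar_loc g : local (ar g).
Proof.
move=> w w' h; rewrite /ar /pg /triw.
rewrite (blkw_local (a:=-8) h) ?(blkw_local (a:=-10) h) ?(blkw_local (a:=-12) h) ?(h (-8 + 4))
  ?(h (-10 + 4)) ?(h (-12 + 4)) ?(h (-8 + 8)) ?(h (-8 + 10)) ?(h (-8 + 12))
  ?(h (-10 + 8)) ?(h (-10 + 10)) ?(h (-10 + 12)) ?(h (-12 + 8)) ?(h (-12 + 10)) ?(h (-12 + 12))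
  ?h //; lia.
Qed.

Lemma aE g c : aut g c = apply (psig g c) c.
Proof.
apply: functional_extensionality => i.
rewrite /aut /ca /ar /pg /triw applyE /psig /tri !blk_sh.
by rewrite -!Z.add_assoc /= ?Z.add_0_r.
Qed.

Lemma A5P g : g \in A5 -> [/\ pvalid g, pcomp (pinv g) g = idp, pcomp g (pinv g) = idp,
  pinv g \in A5 & ppow g 30 = idp].
Proof.
move=> hg.
have /allP/(_ g hg) hv := A5_valid.
have /allP/(_ g hg)/andP[/andP[/eqP h1 /eqP h2] h3] := A5_inv.
by have /allP/(_ g hg)/eqP h4 := A5_exp.
Qed.
Lemma A5_mul g h : g \in A5 -> h \in A5 -> pcomp g h \in A5.
Proof. by move=> hg hh; have /allP/(_ g hg)/allP/(_ h hh) := A5_closed. Qed.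
Lemma pvalid_idp : pvalid idp. Proof. by []. Qed.

Lemma psig_apply g phi c : psig g (apply phi c) = psig g c.
Proof.
apply: functional_extensionality => b; rewrite /psig (blk_apply hoz).
case h: (blk c b) => //=. by rewrite (apply_lane hoz phi (k:=4) h) //; left.
Qed.

Lemma psig_A5 g c b : g \in A5 -> psig g c b \in A5.
Proof. by rewrite /psig; case: ifP => // _ _; apply: A5_id. Qed.

Lemma aut_aut h g c : g \in A5 ->
  aut h (aut g c) = apply (fun b => pcomp (psig h c b) (psig g c b)) c.
Proof.
move=> hg; rewrite !aE psig_apply (apply_comp hoz) // => b.
by have [] := A5P (psig_A5 c b hg).
Qed.

Lemma autK g : g \in A5 -> cancel (aut g) (aut (pinv g)).
Proof.
move=> hg c; have [_ h1 h2 _ _] := A5P hg.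
rewrite aut_aut //; rewrite -[RHS](apply_id one zero); congr apply.
apply: functional_extensionality => b; rewrite /psig; case: ifP => _ //.
Qed.
Lemma autK' g : g \in A5 -> cancel (aut (pinv g)) (aut g).
Proof.
move=> hg c; have [_ h1 h2 h3 _] := A5P hg.
rewrite aut_aut //; rewrite -[RHS](apply_id one zero); congr apply.
apply: functional_extensionality => b; rewrite /psig; case: ifP => _ //.
Qed.

Definition t : C -> C := s2 \o s1.
Definition tinv : C -> C := s1 \o s2.
Lemma tK : cancel t tinv.
Proof. by move=> c; rewrite /t /tinv /= (s2K hoz) (s1K hoz). Qed.
Lemma tinvK : cancel tinv t.
Proof. by move=> c; rewrite /t /tinv /= (s1K hoz) (s2K hoz). Qed.

Lemma cont_s1 : continuous s1. Proof. exact: (ca_cont s1r_loc). Qed.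
Lemma cont_s2 : continuous s2. Proof. exact: (ca_cont s2r_loc). Qed.
Lemma shift_s1 c : s1 (shift c) = shift (s1 c). Proof. exact: ca_shift. Qed.
Lemma shift_s2 c : s2 (shift c) = shift (s2 c). Proof. exact: ca_shift. Qed.

Lemma is_aut_t : is_aut t.
Proof.
split; last by move=> x; rewrite /t /= shift_s1 shift_s2.
exists tinv; split; first exact: tK.
split; first exact: tinvK.
by split; apply: cont_comp; first [exact: cont_s1|exact: cont_s2].
Qed.

Lemma is_aut_aut g : g \in A5 -> is_aut (aut g).
Proof.
move=> hg; split; last by move=> x; exact: ca_shift.
exists (aut (pinv g)); split; first exact: autK.
split; first exact: autK'.
by split; apply: ca_cont; apply: ar_loc.
Qed.

End Aut.

End Aut.
Import Aut.

Module Grp.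

Section Grp.
Variables (S : finType) (one zero : S).
Hypothesis hoz : one != zero.
Local Open Scope Z_scope.
Notation C := (config S).
Notation blk := (blk one zero).
Notation s1 := (s1 one zero).
Notation s2 := (s2 one zero).
Notation apply := (apply one zero).
Notation t := (t one zero).
Notation tinv := (tinv one zero).
Notation aut := (aut one zero).

Definition T (n : Z) : C -> C :=
  if 0 <=? n then iter (Z.to_nat n) t else iter (Z.to_nat (- n)) tinv.

Lemma T0 c : T 0 c = c. Proof. by []. Qed.

Lemma T_succ n c : T (n + 1) c = t (T n c).
Proof.
rewrite /T; case: (Z.leb_spec 0 n) => h.
  have -> : 0 <=? n + 1 = true by apply/Z.leb_le; lia.
  by rewrite (_ : Z.to_nat (n + 1) = (Z.to_nat n).+1); last lia.
case: (Z.leb_spec 0 (n + 1)) => h'.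
  have -> : n = -1 by lia.
  by rewrite /= (tinvK hoz).
have -> : Z.to_nat (- n) = (Z.to_nat (- (n + 1))).+1.
  rewrite -Z2Nat.inj_succ; [f_equal; lia | lia].
by rewrite iterS (tinvK hoz).
Qed.

Lemma T_pred n c : T (n - 1) c = tinv (T n c).
Proof.
have := T_succ (n - 1) c; rewrite Z.sub_add => ->; by rewrite (tK hoz).
Qed.

Lemma T_add m n c : T (m + n) c = T m (T n c).
Proof.
elim/Z.peano_ind: m c => [|m IH|m IH] c; first by [].
  by rewrite -Z.add_assoc (Z.add_comm 1) Z.add_assoc T_succ IH T_succ.
rewrite (_ : m - 1 + n = (m + n) - 1); last lia.
by rewrite !T_pred IH.
Qed.

Lemma T_K n c : T (- n) (T n c) = c.
Proof. by rewrite -T_add Z.add_opp_diag_l. Qed.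
Lemma T_K' n c : T n (T (- n) c) = c.
Proof. by rewrite -T_add Z.add_opp_diag_r. Qed.

Lemma t_apply phi c : t (apply phi c) = apply phi (t c).
Proof. by rewrite /Aut.t /= (s1_apply hoz) (s2_apply hoz). Qed.
Lemma tinv_apply phi c : tinv (apply phi c) = apply phi (tinv c).
Proof. by rewrite /Aut.tinv /= (s2_apply hoz) (s1_apply hoz). Qed.

Lemma T_apply n phi c : T n (apply phi c) = apply phi (T n c).
Proof.
rewrite /T; case: ifP => _; elim: (Z.to_nat _) => //= k ->;
  by rewrite ?t_apply ?tinv_apply.
Qed.

Lemma blk_t c b : blk (t c) b = blk c b.
Proof. by rewrite /Aut.t /= (blk_s2 hoz) (blk_s1 hoz). Qed.
Lemma blk_tinv c b : blk (tinv c) b = blk c b.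
Proof. by rewrite /Aut.tinv /= (blk_s1 hoz) (blk_s2 hoz). Qed.
Lemma blk_T n c b : blk (T n c) b = blk c b.
Proof.
rewrite /T; case: ifP => _; elim: (Z.to_nat _) => //= k <-;
  by rewrite ?blk_t ?blk_tinv.
Qed.

Definition inv (psi : C -> Z -> perm5) :=
  forall phi c, (forall b, pvalid (phi b)) -> psi (apply phi c) = psi c.
Definition vld (psi : C -> Z -> perm5) := forall c b, psi c b \in A5.
Definition Bf (psi : C -> Z -> perm5) (c : C) : C := apply (psi c) c.
Definition Gd (h : C -> C) (n : Z) :=
  exists psi, inv psi /\ vld psi /\ forall c, h c = Bf psi (T n c).

Lemma vld_valid psi c b : vld psi -> pvalid (psi c b).
Proof. by move=> h; have [] := A5P (h c b). Qed.

Lemma Bf_comp psi1 psi2 c : inv psi1 -> vld psi2 ->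
  Bf psi1 (Bf psi2 c) = Bf (fun c b => pcomp (psi1 c b) (psi2 c b)) c.
Proof.
move=> h1 h2; rewrite /Bf h1; last by move=> b; apply: vld_valid.
by rewrite (apply_comp hoz) // => b; apply: vld_valid.
Qed.

Lemma T_Bf m psi c : T m (Bf psi c) = Bf (fun c => psi (T (- m) c)) (T m c).
Proof. by rewrite /Bf T_apply T_K. Qed.

Lemma inv_T m psi : inv psi -> inv (fun c => psi (T m c)).
Proof. by move=> h phi c hv; rewrite T_apply h. Qed.

Lemma Gd_comp h1 h2 n1 n2 : Gd h1 n1 -> Gd h2 n2 -> Gd (h1 \o h2) (n1 + n2).
Proof.
move=> [p1 [i1 [v1 e1]]] [p2 [i2 [v2 e2]]].
exists (fun c b => pcomp (p1 c b) (p2 (T (- n1) c) b)); split; last split.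
- move=> phi c hv /=; rewrite i1 //; congr (fun f => fun b => pcomp (p1 c b) (f b)).
  by rewrite T_apply i2.
- by move=> c b; apply: A5_mul.
- move=> c /=; rewrite e2 e1 T_Bf Bf_comp ?T_add //.
Qed.

Lemma Bf_id c : Bf (fun _ _ => idp) c = c.
Proof. exact: apply_id. Qed.

Lemma Gd_inv h h' n : Gd h n -> cancel h h' -> cancel h' h -> Gd h' (- n).
Proof.
move=> [p [ip [vp e]]] k1 k2.
set pi := fun c b => pinv (p c b).
have hpi : inv pi by move=> phi c hv; rewrite /pi ip.
have vpi : vld pi by move=> c b; have [] := A5P (vp c b).
exists (fun c => pi (T n c)); split; last split.
- exact: inv_T.
- by move=> c b; apply: vpi.
move=> c.
have E : h (T (- n) (Bf pi c)) = c.
  rewrite e T_K' Bf_comp // -[RHS]Bf_id; congr Bf.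
  apply: functional_extensionality => d; apply: functional_extensionality => b.
  by have [] := A5P (vp d b).
rewrite -{1}E k1 T_Bf Z.opp_involutive //.
Qed.

Lemma iter_Bf psi k c : inv psi -> vld psi ->
  iter k (Bf psi) c = Bf (fun c b => ppow (psi c b) k) c.
Proof.
move=> ip vp; elim: k => [|k IH] /=; first by rewrite Bf_id.
rewrite IH Bf_comp //.
move=> d b; elim: k {IH} => [|k IH] /=; first exact: A5_id.
exact: A5_mul.
Qed.

Lemma Gd0_exp h : Gd h 0 -> forall c, iter 30 h c = c.
Proof.
move=> [p [ip [vp e]]] c.
have -> : h = Bf p by apply: functional_extensionality => d; rewrite e.
rewrite iter_Bf // -[RHS]Bf_id; congr Bf.
apply: functional_extensionality => d; apply: functional_extensionality => b.
by have [] := A5P (vp d b).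
Qed.

Lemma Gd_t : Gd t 1.
Proof.
exists (fun _ _ => idp); split; first by []. split; first by [].
by move=> c; rewrite Bf_id.
Qed.
Lemma Gd_tinv : Gd tinv (-1).
Proof.
exists (fun _ _ => idp); split; first by []. split; first by [].
by move=> c; rewrite Bf_id.
Qed.
Lemma Gd_aut g : g \in A5 -> Gd (aut g) 0.
Proof.
move=> hg; exists (psig one zero g); split; last split.
- by move=> phi c hv; rewrite (psig_apply hoz).
- by move=> c b; apply: psig_A5.
- by move=> c; rewrite aE.
Qed.
Lemma Gd_id : Gd id 0.
Proof. exists (fun _ _ => idp); split; first by []. split; first by []. by move=> c; rewrite Bf_id. Qed.

Lemma Gd_ext h h' n : Gd h n -> (forall c, h c = h' c) -> Gd h' n.
Proof. move=> [p [ip [vp e]]] E; exists p; split => //; split => // c; by rewrite -E. Qed.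

End Grp.

End Grp.
Import Grp.

Module Chain.

Section Chain.
Variables (S : finType) (one zero : S).
Hypothesis hoz : one != zero.
Local Open Scope Z_scope.
Notation C := (config S).
Notation blk := (blk one zero).
Notation s1 := (s1 one zero).
Notation s2 := (s2 one zero).
Notation t := (t one zero).
Notation tinv := (tinv one zero).
Notation T := (T one zero).

Definition cell (U D : Z -> S) (x0 : trip S) (k j : Z) : S :=
  if j =? 0 then one else if j =? 1 then one else if j =? 2 then one else
  if j =? 4 then U k else if j =? 6 then D k else if j =? 8 then x0.1.1 else
  if j =? 10 then x0.1.2 else if j =? 12 then x0.2 else zero.
Definition chainc U D x0 : C := fun i => cell U D x0 (i / 14) (i mod 14).

Lemma chain_at U D x0 k m : chainc U D x0 (14 * k + m) = cell U D x0 (k + m / 14) (m mod 14).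
Proof.
rewrite /chainc; f_equal; first by rewrite Z.mul_comm Z.div_add_l.
by rewrite Z.add_comm Z.mul_comm Z.mod_add.
Qed.

Ltac zc := repeat match goal with
 | |- context [(?a / 14)%Z] => let v := eval vm_compute in (a / 14)%Z in
     match v with Z0 => idtac | Zpos _ => idtac | Zneg _ => idtac end; change (a / 14)%Z with v
 | |- context [(?a mod 14)%Z] => let v := eval vm_compute in (a mod 14)%Z in
     match v with Z0 => idtac | Zpos _ => idtac | Zneg _ => idtac end; change (a mod 14)%Z with v
 end.

Lemma blk_chain0 U D x0 q : blk (chainc U D x0) (14 * q).
Proof.
rewrite /Blk.blk /blkw !chain_at; zc; rewrite /cell /=.
by rewrite !eqxx.
Qed.

Lemma blk_chain U D x0 q m : blk (chainc U D x0) (14 * q + m) = (m mod 14 =? 0).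
Proof.
have hm := Z.div_mod m 14; have hr := Z.mod_pos_bound m 14.
set r := m mod 14 in hm hr *; set d := m / 14 in hm.
have -> : 14 * q + m = 14 * (q + d) + r by lia.
case: (Z.eqb_spec r 0) => h.
  by rewrite h Z.add_0_r blk_chain0.
apply/negbTE/negP => hb.
have := no2 hoz hb (blk_chain0 U D x0 (q + d)); lia.
Qed.

Lemma split14 i : exists k j, i = 14 * k + j /\ 0 <= j < 14.
Proof.
exists (i / 14), (i mod 14); split; [exact: Z.div_mod | exact: Z.mod_pos_bound].
Qed.

Ltac chcase := move=> i; have [k [j [-> hj]]] := split14 i;
  (have : j = 0 \/ j = 1 \/ j = 2 \/ j = 3 \/ j = 4 \/ j = 5 \/ j = 6 \/ j = 7 \/ j = 8 \/
     j = 9 \/ j = 10 \/ j = 11 \/ j = 12 \/ j = 13 by lia);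
  case => [->|[->|[->|[->|[->|[->|[->|[->|[->|[->|[->|[->|[->|->]]]]]]]]]]]]].

Lemma s1_chain U D x0 : s1 (chainc U D x0) = chainc D U x0.
Proof.
apply: functional_extensionality; chcase; rewrite s1E -!Z.add_assoc /= !blk_chain;
  zc; rewrite /= !chain_at; zc; rewrite /cell /= ?Z.add_0_r //.
Qed.

Lemma s2_chain U D x0 : s2 (chainc U D x0) = chainc (fun k => D (k + -1)) (fun k => U (k + 1)) x0.
Proof.
apply: functional_extensionality; chcase; rewrite s2E -!Z.add_assoc /= !blk_chain;
  zc; rewrite /= !chain_at; zc; rewrite /cell /= ?Z.add_0_r //.
Qed.

Lemma t_chain U D x0 : t (chainc U D x0) = chainc (fun k => U (k + -1)) (fun k => D (k + 1)) x0.
Proof. by rewrite /Aut.t /= s1_chain s2_chain. Qed.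
Lemma tinv_chain U D x0 : tinv (chainc U D x0) = chainc (fun k => U (k + 1)) (fun k => D (k + -1)) x0.
Proof. by rewrite /Aut.tinv /= s2_chain s1_chain. Qed.

Lemma chain_congr U D U' D' x0 : (forall k, U k = U' k) -> (forall k, D k = D' k) ->
  chainc U D x0 = chainc U' D' x0.
Proof.
move=> h1 h2; have -> : U = U' by apply: functional_extensionality.
by have -> : D = D' by apply: functional_extensionality.
Qed.

Lemma T_chain n U D x0 :
  T n (chainc U D x0) = chainc (fun k => U (k - n)) (fun k => D (k + n)) x0.
Proof.
elim/Z.peano_ind: n => [|n IH|n IH].
- by apply: chain_congr => k; rewrite ?Z.sub_0_r ?Z.add_0_r.
- rewrite (T_succ hoz) IH t_chain; apply: chain_congr => k; f_equal; lia.
- rewrite (T_pred hoz) IH tinv_chain; apply: chain_congr => k; f_equal; lia.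
Qed.

End Chain.

End Chain.
Import Chain.

Module Free.

Section Free.
Variables (S : finType) (one zero : S).
Hypothesis hoz : one != zero.
Local Open Scope Z_scope.
Notation C := (config S).
Notation t := (t one zero).
Notation tinv := (tinv one zero).
Notation aut := (aut one zero).
Notation Gd := (Gd one zero).

Definition gens : list (C -> C) := t :: List.map aut A5.

Lemma In_A5 g : In g A5 -> g \in A5.
Proof. elim: A5 => //= x s IH [->|h]; rewrite inE ?eqxx //; by rewrite IH ?orbT. Qed.

Lemma In_gens f : In f gens -> f = t \/ exists g, g \in A5 /\ f = aut g.
Proof.
move=> h0; have [<-|h] : t = f \/ In f (List.map aut A5) := h0; first by left.
have [g [<- hg]] := proj1 (in_map_iff _ _ _) h; right; exists g; split => //; exact: In_A5.
Qed.

Lemma Gd_gens f : In f gens -> exists n, Gd f n.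
Proof.
case/In_gens => [->|[g [hg ->]]]; first by exists 1; exact (Gd_t one zero).
by exists 0; exact (Gd_aut hoz hg).
Qed.

Lemma gen_Gd h : gen_list gens h -> exists n, Gd h n.
Proof.
elim=> [|a b ha _ [n hn]|a a' b ha k1 k2 _ [n hn]].
- by exists 0; exact (Gd_id one zero).
- have [m hm] := Gd_gens ha; exists (m + n); exact (Gd_comp hoz hm hn).
- have [m hm] := Gd_gens ha; exists (- m + n); apply (Gd_comp hoz (n1:=- m) (n2:=n)) => //.
  exact (Gd_inv hoz hm k1 k2).
Qed.

Fixpoint wrep (k : nat) : list letter :=
  match k with 0%N => nil | k'.+1 => (false, true) :: (true, true) :: (false, false) ::
    (true, false) :: wrep k' end.

Lemma reduced_tail k : reduced ((true, false) :: wrep k).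
Proof. elim: k => [|k IH] //=; do 4 (split; first by case); exact IH. Qed.

Lemma reduced_wrep k : reduced (wrep k).
Proof.
case: k => [|k] //=; split; first by case.
split; first by case. split; first by case. exact: reduced_tail.
Qed.

Lemma eval_wrep (a a' b b' : C -> C) k c :
  eval_word a a' b b' (wrep k) c = iter k (fun c => a' (b' (a (b c)))) c.
Proof. by elim: k => //= k ->. Qed.

Lemma nofree : ~ contains_free2 (gen_list gens).
Proof.
move=> [a [a' [b [b' [Ha [Hb [k1 [k2 [k3 [k4 Hw]]]]]]]]]].
have [n1 h1] := gen_Gd Ha; have [n2 h2] := gen_Gd Hb.
have h1' := Gd_inv hoz h1 k1 k2; have h2' := Gd_inv hoz h2 k3 k4.
have := Gd_comp hoz h1' (Gd_comp hoz h2' (Gd_comp hoz h1 h2)).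
rewrite (_ : - n1 + (- n2 + (n1 + n2)) = 0); last lia.
move/(Gd0_exp hoz) => E.
apply: (Hw (wrep 30)) => //; first exact: reduced_wrep.
apply: functional_extensionality => c; rewrite eval_wrep.
exact: E.
Qed.

End Free.

End Free.
Import Free.

From mathcomp Require Import zify.
Module Pig.

Lemma pigeon (A : Type) (l : list A) (P : nat -> A -> Prop) :
  (forall N, (N <= length l)%N -> exists r, In r l /\ P N r) ->
  exists N1 N2 r, (N1 < N2)%N /\ (N2 <= length l)%N /\ P N1 r /\ P N2 r.
Proof.
elim: l P => [|a l IH] P h.
  by have [r [[] _]] := h 0%N (leqnn 0).
case: (classic (exists N1 N2, (N1 < N2)%N /\ (N2 <= (length l).+1)%N /\ P N1 a /\ P N2 a)).
  by move=> [N1 [N2 [h1 [h2 [h3 h4]]]]]; exists N1, N2, a.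
move=> nd.
case: (classic (exists N0, (N0 <= (length l).+1)%N /\ P N0 a)) => [[N0 [hN0 pN0]]|none].
- pose f N := if (N < N0)%N then N else N.+1.
  have hf : forall N, (N <= length l)%N -> exists r, In r l /\ P (f N) r.
    move=> N hN; have hfN : (f N <= length (a :: l))%N by rewrite /f /=; case: ifP; lia.
    have [r [[<-|hr] pr]] := h _ hfN; last by exists r.
    exfalso; apply: nd; have hne : f N != N0 by rewrite /f; case: ifP; lia.
    case: (ltngtP (f N) N0) => lt.
    - by exists (f N), N0; split => //; split => //.
    - by exists N0, (f N); split => //; split => //.
    - by rewrite lt eqxx in hne.
  have [N1 [N2 [r [h1 [h2 [h3 h4]]]]]] := IH (fun N r => P (f N) r) hf.
  exists (f N1), (f N2), r; split; first by rewrite /f; do 2 case: ifP; lia.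
  split; first by rewrite /f /=; case: ifP; lia.
  by [].
- have hf : forall N, (N <= length l)%N -> exists r, In r l /\ P N r.
    move=> N hN; have hN' : (N <= length (a :: l))%N by rewrite /=; lia.
    have [r [[<-|hr] pr]] := h _ hN'; last by exists r.
    by exfalso; apply: none; exists N; split => //; lia.
  have [N1 [N2 [r [h1 [h2 [h3 h4]]]]]] := IH P hf.
  exists N1, N2, r; split => //; split; first by rewrite /=; lia.
  by [].
Qed.

End Pig.
Import Pig.

Module Solv.

Section Solv.
Variables (S : finType) (one zero : S).
Hypothesis hoz : one != zero.
Local Open Scope Z_scope.
Notation C := (config S).
Notation blk := (blk one zero).
Notation apply := (apply one zero).
Notation t := (t one zero).
Notation tinv := (tinv one zero).
Notation aut := (aut one zero).
Notation T := (T one zero).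
Notation act := (act one zero).
Notation psig := (psig one zero).

Definition aP (p : Z) (g : perm5) : C -> C := fun c => T p (aut g (T (- p) c)).

Lemma aP_apply p g c : aP p g c = apply (psig g (T (- p) c)) c.
Proof. by rewrite /aP aE (T_apply hoz) (T_K' hoz). Qed.

Lemma aPK p g : g \in A5 -> cancel (aP p g) (aP p (pinv g)).
Proof. by move=> hg c; rewrite /aP (T_K hoz) (autK hoz) // (T_K' hoz). Qed.
Lemma aPK' p g : g \in A5 -> cancel (aP p (pinv g)) (aP p g).
Proof. by move=> hg c; rewrite /aP (T_K hoz) (autK' hoz) // (T_K' hoz). Qed.

Lemma aP_conj M P g x : T (- M) (aP P g (T M x)) = aP (P - M) g x.
Proof.
rewrite /aP -!(T_add hoz); congr (T _ (aut g (T _ x))); lia.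
Qed.

Definition Fib (J : Z) (c : C) :=
  blk c 0 /\ forall q : nat, (T (- (Z.of_nat q * J)) c 4 == one) = (q == 0)%N.

Lemma Fib_apply J phi c : Fib J (apply phi c) <-> Fib J c.
Proof.
rewrite /Fib (blk_apply hoz); split => [[hb hq]|[hb hq]]; split => // q; rewrite -hq.
- rewrite (T_apply hoz).
  have hb' : blk (T (- (Z.of_nat q * J)) c) 0 by rewrite (blk_T hoz).
  by have /= -> := apply_lane hoz phi (k := 4) hb' (or_introl erefl).
- rewrite (T_apply hoz).
  have hb' : blk (T (- (Z.of_nat q * J)) c) 0 by rewrite (blk_T hoz).
  by have /= -> := apply_lane hoz phi (k := 4) hb' (or_introl erefl).
Qed.

Definition Pf (J : Z) (k : C -> C) (h : trip S -> trip S) :=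
  [/\ forall c, Fib J c -> Fib J (k c),
      forall c, Fib J c -> exists d, Fib J d /\ k d = c &
      forall c, Fib J c -> tri (k c) 0 = h (tri c 0)].

Lemma Pf_comp J k1 k2 h1 h2 : Pf J k1 h1 -> Pf J k2 h2 -> Pf J (k1 \o k2) (h1 \o h2).
Proof.
move=> [a1 b1 c1] [a2 b2 c2]; split => c hc /=.
- by apply: a1; apply: a2.
- have [d [hd <-]] := b1 c hc; have [e [he <-]] := b2 d hd; by exists e.
- by rewrite c1 ?c2 //; apply: a2.
Qed.

Lemma Pf_id J : Pf J id id.
Proof. by split => // c hc; exists c. Qed.

Lemma Pf_ext J k k' h h' : Pf J k h -> (forall c, k c = k' c) -> (forall v, h v = h' v) ->
  Pf J k' h'.
Proof.
move=> [a b c] ek eh; split => x hx.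
- by rewrite -ek; apply: a.
- by have [d [hd <-]] := b x hx; exists d; split => //; rewrite ek.
- by rewrite -ek -eh; apply: c.
Qed.

Lemma Pf_inv J k k' h h' : Pf J k h -> cancel k k' -> cancel k' k ->
  (forall v, h' (h v) = v) -> Pf J k' h'.
Proof.
move=> [a b c] c1 c2 eh; split => x hx.
- by have [d [hd <-]] := b x hx; rewrite c1.
- by exists (k x); split; [apply: a | rewrite c1].
- have [d [hd <-]] := b x hx; by rewrite c1 c.
Qed.

Lemma Pf_aP J g (q : nat) : g \in A5 ->
  Pf J (aP (Z.of_nat q * J) g) (act (if q == 0%N then g else idp)).
Proof.
move=> hg; split => c hc.
- by rewrite aP_apply; apply/Fib_apply.
- exists (aP (Z.of_nat q * J) (pinv g) c); split; last exact: aPK'.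
  by rewrite aP_apply; apply/Fib_apply.
- case: hc => hb hq.
  rewrite aP_apply (tri_apply hoz) // /Aut.psig (blk_T hoz) hb /=.
  by rewrite hq.
Qed.

Fixpoint seqprod (J : Z) (g : perm5) (b n : nat) : C -> C :=
  match n with
  | 0%N => id
  | n'.+1 => aP (Z.of_nat b * J) g \o seqprod J g b.+1 n'
  end.

Lemma Pf_seq J g b n : g \in A5 -> (0 < b)%N -> Pf J (seqprod J g b n) id.
Proof.
move=> hg; elim: n b => [|n IH] b hb /=; first exact: Pf_id.
apply: Pf_ext; first exact: (Pf_comp (Pf_aP J b hg) (IH b.+1 erefl)).
  by [].
move=> v /=; case: b hb => // b _ /=; exact: act_id.
Qed.

Lemma Pf_seq0 J g n : g \in A5 -> (0 < n)%N -> Pf J (seqprod J g 0 n) (act g).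
Proof.
move=> hg; case: n => // n _ /=.
exact (Pf_comp (Pf_aP J 0 hg) (@Pf_seq J g 1 n hg (erefl true))).
Qed.

Lemma seq_split J g b m n c :
  seqprod J g b (m + n) c = seqprod J g b m (seqprod J g (b + m) n c).
Proof.
elim: m b => [|m IH] b /=; first by rewrite addn0.
by rewrite IH addSnnS.
Qed.

Lemma seq_conj J g N1 n b c :
  T (- (Z.of_nat N1 * J)) (seqprod J g (b + N1) n (T (Z.of_nat N1 * J) c)) = seqprod J g b n c.
Proof.
elim: n b c => [|n IH] b c /=; first by rewrite (T_K hoz).
rewrite -(T_K' hoz (Z.of_nat N1 * J) (seqprod _ _ _ _ _)) -addSn IH aP_conj.
congr (aP _ g _); rewrite Nat2Z.inj_add; ring.
Qed.

Lemma seq_inj J g b n : g \in A5 -> injective (seqprod J g b n).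
Proof.
move=> hg; elim: n b => [|n IH] b /=; first by move=> x y.
apply: inj_comp; last exact: IH.
exact: can_inj (aPK _ hg).
Qed.

Lemma coset_inj (r k1 k2 k1i h1 f : C -> C) :
  (forall c, r (k1 c) = h1 c) -> (forall c, r (k2 c) = h1 (f c)) ->
  cancel k1 k1i -> cancel k1i k1 -> injective h1 -> forall c, k1i (k2 c) = f c.
Proof.
move=> e1 e2 c1 c2 ih c.
have rinj : injective r.
  by move=> y z e; rewrite -(c2 y) -(c2 z); congr k1; apply: ih; rewrite -!e1 !c2.
have : r (k2 c) = r (k1 (f c)) by rewrite e1 e2.
by move/rinj => ->; rewrite c1.
Qed.

Notation H := (gen_list (gens one zero)).

Lemma gen_comp (A : (C -> C) -> Prop) f h : gen A f -> gen A h -> gen A (f \o h).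
Proof.
move=> hf hh; elim: hf => [|a b ha _ IH|a a' b ha k1 k2 _ IH].
- exact hh.
- exact (gen_mul ha IH).
- exact (gen_mulinv ha k1 k2 IH).
Qed.

Lemma mem_In g : g \in A5 -> In g A5.
Proof. elim: A5 => //= x s IH; rewrite inE => /orP[/eqP ->|/IH h]; [by left|by right]. Qed.

Lemma H_t : H t.
Proof. exact (gen_mul (or_introl erefl) (gen_id _)). Qed.
Lemma H_tinv : H tinv.
Proof. exact (gen_mulinv (A := fun f => In f (gens one zero)) (or_introl erefl) (tK hoz) (tinvK hoz) (gen_id _)). Qed.
Lemma H_aut g : g \in A5 -> H (aut g).
Proof.
move=> hg; have hin : In (aut g) (gens one zero) by right; apply: in_map; apply: mem_In.
exact (gen_mul hin (gen_id _)).
Qed.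

Lemma H_iter f n : H f -> H (iter n f).
Proof.
move=> hf; elim: n => [|n IH] /=; first exact (gen_id _).
exact (gen_comp hf IH).
Qed.

Lemma H_T n : H (T n).
Proof. rewrite /Grp.T; case: ifP => _; apply: H_iter; [exact: H_t|exact: H_tinv]. Qed.

Lemma H_aP p g : g \in A5 -> H (aP p g).
Proof. move=> hg; exact (gen_comp (H_T p) (gen_comp (H_aut hg) (H_T (- p)))). Qed.

Lemma H_seq J g b n : g \in A5 -> H (seqprod J g b n).
Proof.
move=> hg; elim: n b => [|n IH] b /=; first exact (gen_id _).
exact (gen_comp (H_aP _ hg) (IH _)).
Qed.

Definition delta (k : Z) : S := if Z.eqb k 0 then one else zero.
Definition cstar : C := chainc one zero delta (fun _ => zero) (enc one zero 0).

Lemma chain4 U D x0 : chainc one zero U D x0 4 = U 0.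
Proof. by rewrite /chainc; change (4 / 14) with 0; change (4 mod 14) with 4. Qed.

Lemma tri_chain U D x0 : tri (chainc one zero U D x0) 0 = x0.
Proof.
rewrite /tri /chainc /=.
change (8 / 14) with 0; change (8 mod 14) with 8.
change (10 / 14) with 0; change (10 mod 14) with 10.
change (12 / 14) with 0; change (12 mod 14) with 12.
by rewrite /cell /= trip_eta.
Qed.

Lemma Fib_star J : 0 < J -> Fib J cstar.
Proof.
move=> hJ; split; first exact (blk_chain0 one zero delta (fun _ => zero) (enc one zero 0) 0).
move=> q; rewrite (T_chain hoz) chain4 /delta.
case: q => [|q] /=; first by rewrite eqxx.
have -> : (0 - - (Z.of_nat q.+1 * J) =? 0) = false.
  by apply/Z.eqb_neq; nia.
by rewrite eq_sym (negbTE hoz).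
Qed.

Lemma nonvs : ~ virtually_solvable H.
Proof.
move=> [K [[Kid [Kmul Kinv]] [KH [[lr hlr] [n0 hsolv]]]]].
have pig : forall (hN : nat -> C -> C), (forall N, H (hN N)) ->
    exists N1 N2 r k1 k2, [/\ (N1 < N2)%N, K k1, K k2, hN N1 = r \o k1 & hN N2 = r \o k2].
  move=> hN hH.
  have := @pigeon _ lr (fun N r => exists k, K k /\ hN N = r \o k).
  case.
  - move=> N _; have [r [k [hr [hk e]]]] := hlr _ (hH N).
    by exists r; split => //; exists k.
  - move=> N1 [N2 [r [h1 [_ [[k1 [hk1 e1]] [k2 [hk2 e2]]]]]]].
    by exists N1, N2, r, k1, k2.
have [N1 [N2 [r [k1 [k2 [lt hk1 hk2 e1 e2]]]]]] := pig (fun N => T (Z.of_nat N)) (fun N => H_T _).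
have [k1i [c1 [c2 hk1i]]] := Kinv k1 hk1.
set J := Z.of_nat (N2 - N1).
have hJ : 0 < J by rewrite /J; lia.
have E : forall c, k1i (k2 c) = T J c.
  apply: (coset_inj (r := r) (h1 := T (Z.of_nat N1))).
  - by move=> c; rewrite e1.
  - move=> c; rewrite -(T_add hoz).
    have -> : Z.of_nat N1 + J = Z.of_nat N2 by rewrite /J; lia.
    by rewrite e2.
  - exact c1.
  - exact c2.
  - exact (can_inj (T_K hoz (Z.of_nat N1))).
have KJ : K (T J).
  have -> : T J = k1i \o k2 by apply: functional_extensionality => c; rewrite /= E.
  exact: Kmul.
have KTp : forall q : nat, K (T (Z.of_nat q * J)).
  elim => [|q IH]; first exact Kid.
  have -> : T (Z.of_nat q.+1 * J) = T J \o T (Z.of_nat q * J).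
    apply: functional_extensionality => c.
    rewrite -[RHS]/(T J (T (Z.of_nat q * J) c)) -(T_add hoz); congr (T _ c).
    nia.
  exact: Kmul.
have KTn : forall q : nat, K (T (- (Z.of_nat q * J))).
  move=> q; have [ki [d1 [d2 hki]]] := Kinv _ (KTp q).
  have -> : T (- (Z.of_nat q * J)) = ki; last exact hki.
  apply: functional_extensionality => c.
  by rewrite -[LHS](d1 (T (- (Z.of_nat q * J)) c)) (T_K' hoz).
have C0 : forall g, g \in A5 ->
    exists k k', [/\ K k, cancel k k', cancel k' k & Pf J k (act g)].
  move=> g hg.
  have [M1 [M2 [r' [l1 [l2 [lt' hl1 hl2 f1 f2]]]]]] :=
    pig (fun N => seqprod J g 0 N) (fun N => H_seq J 0 N hg).
  have [l1i [d1 [d2 hl1i]]] := Kinv _ hl1.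
  have E' : forall c, l1i (l2 c) = seqprod J g M1 (M2 - M1) c.
    apply: (coset_inj (r := r') (h1 := seqprod J g 0 M1)).
    - by move=> c; rewrite f1.
    - move=> c; rewrite -[r' (l2 c)]/((r' \o l2) c) -f2.
      have e : M2 = (M1 + (M2 - M1))%N by lia.
      by rewrite {1}e seq_split add0n.
    - exact d1.
    - exact d2.
    - exact (seq_inj (J:=J) (b:=0) (n:=M1) hg).
  set M := Z.of_nat M1 * J.
  have hk : K (fun c => T (- M) (l1i (l2 (T M c)))).
    exact (Kmul _ _ (KTn M1) (Kmul _ _ (Kmul _ _ hl1i hl2) (KTp M1))).
  have [k' [e1' [e2' _]]] := Kinv _ hk.
  exists (fun c => T (- M) (l1i (l2 (T M c)))), k'; split => //.
  have hpos : (0 < M2 - M1)%N by rewrite subn_gt0.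
  apply: Pf_ext; first exact (@Pf_seq0 J g (M2 - M1) hg hpos).
    move=> c /=; rewrite E'.
    by have := seq_conj J g M1 (M2 - M1) 0 c; rewrite add0n => ->.
  by [].
have Cn : forall n g, g \in A5 ->
    exists k k', [/\ derived_iter n K k, cancel k k', cancel k' k & Pf J k (act g)].
  elim => [|n IH] g hg; first exact: C0.
  have /allP/(_ g hg)/hasP[x hx /hasP[y hy /eqP ->]] := A5_comm.
  have [kx [kx' [dx cx1 cx2 px]]] := IH x hx.
  have [ky [ky' [dy cy1 cy2 py]]] := IH y hy.
  have [vx ix1 ix2 ix3 _] := A5P hx.
  have [vy iy1 iy2 iy3 _] := A5P hy.
  exists ((kx' \o ky' \o kx \o ky) \o id), ((ky' \o kx' \o ky \o kx) \o id); split.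
  - apply: (gen_mul _ (gen_id _)).
    exists kx, kx', ky, ky'; do 6 (split => //).
  - by move=> c /=; rewrite cx2 cy2 cx1 cy1.
  - by move=> c /=; rewrite cy2 cx2 cy1 cx1.
  - have pix : Pf J kx' (act (pinv x)).
      apply: (Pf_inv px cx1 cx2) => v; by rewrite -act_comp // ix1 act_id.
    have piy : Pf J ky' (act (pinv y)).
      apply: (Pf_inv py cy1 cy2) => v; by rewrite -act_comp // iy1 act_id.
    apply: Pf_ext; first exact (Pf_comp (Pf_comp (Pf_comp (Pf_comp pix piy) px) py) (Pf_id J)).
      by [].
    move=> v /=; rewrite /pcomm.
    have vxy : pvalid (pcomp x y) by have [] := A5P (A5_mul hx hy).
    have v2 : pvalid (pcomp (pinv y) (pcomp x y)).
      by have [] := A5P (A5_mul iy3 (A5_mul hx hy)).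
    rewrite (act_comp hoz (pinv x) _ v2) (act_comp hoz (pinv y) _ vxy).
    by rewrite (act_comp hoz x _ vy).
have hg0 : [:: 1; 2; 0; 3; 4]%N \in A5 by [].
have [k [k' [hk _ _ [_ _ pt]]]] := Cn n0 _ hg0.
have ek := hsolv k hk.
have := pt _ (Fib_star hJ); rewrite ek /= /cstar tri_chain.
rewrite /Act.act dec_enc //= => e.
by have := enc01 hoz; rewrite e eqxx.
Qed.

End Solv.

End Solv.
Import Solv.

Theorem mainTheorem1 (Sigma : finType) (hSigma : 1 < #|Sigma|) :
  exists l : list (config Sigma -> config Sigma),
    (forall f, In f l -> is_aut f) /\
    ~ virtually_solvable (gen_list l) /\
    ~ contains_free2 (gen_list l).
Proof.
have [one [zero [_ _ hoz]]] : exists x y : Sigma, [/\ x \in Sigma, y \in Sigma & x != y].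
  by apply/card_gt1P.
exists (gens one zero); split; last split.
- move=> f /(In_gens) [->|[g [hg ->]]]; first exact: is_aut_t hoz.
  exact: is_aut_aut hoz g hg.
- exact: nonvs hoz.
- exact: nofree hoz.
Qed.
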